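(* Let $d>2$ be even and $n\ge2$. There is no polynomial $\varphi$ in the coefficients of $f\in\mathbb R[x]_d$ such that $\varphi(f)>0$ for every $f$ in the interior of $P_{n,d}$ and $\varphi(f)=0$ for every $f$ on the boundary of $P_{n,d}$. Consequently, $-\log\varphi(f)$ cannot be a barrier function for $P_{n,d}$ with $\varphi$ a polynomial, and $P_{n,d}$ is not representable by a linear matrix inequality: there is no symmetric matrix pencil $L(f)=\sum_{\alpha\in\mathbb N^n,|\alpha|=d}f_\alpha A_\alpha$ (with $f(x)=\sum_\alpha f_\alpha x^\alpha$ and constant real symmetric matrices $A_\alpha$) such that $P_{n,d}=\{f\in\mathbb R[x]_d: L(f)\succeq0\}$ and $L(f)\succ0$ for all $f$ in the interior of $P_{n,d}$.
   Context: $x=(x_1,\dots,x_n)$; $\mathbb R[x]_d$ is the space of real forms of degree $d$ in $x$, identified with its coefficient vectors $(f_\alpha)_{|\alpha|=d}$. $P_{n,d}=\{f\in\mathbb R[x]_d: f(u)\ge0\ \forall u\in\mathbb R^n\}$; interior and boundary are in the Euclidean topology. A barrier function is a function tending to $+\infty$ at the boundary, here of the form $-\log\varphi$ with $\varphi>0$ on the interior and $\varphi=0$ on the boundary. *)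

(* Defs.v *)
From mathcomp Require Import all_boot.
From Stdlib Require Import Reals.

Set Implicit Arguments.
Unset Strict Implicit.
Unset Printing Implicit Defensive.

(* Exponent vectors alpha in N^n with |alpha| = d (each alpha_i <= d). *)
Definition mon (n d : nat) : finType :=
  {a : {ffun 'I_n -> 'I_d.+1} | (\sum_(i : 'I_n) (a i : nat))%N == d}.

Definition mexp n d (a : mon n d) (i : 'I_n) : nat := nat_of_ord (sval a i).

(* R[x]_d identified with coefficient vectors (f_alpha)_{|alpha| = d}. *)
Definition form (n d : nat) := mon n d -> R.

Definition eval_form n d (f : form n d) (u : 'I_n -> R) : R :=
  \big[Rplus/0%R]_(a : mon n d)
     Rmult (f a) (\big[Rmult/1%R]_(i : 'I_n) pow (u i) (mexp a i)).

Definition Pnd n d (f : form n d) : Prop :=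
  forall u : 'I_n -> R, (0 <= eval_form f u)%R.

Definition dist_form n d (f g : form n d) : R :=
  sqrt (\big[Rplus/0%R]_(a : mon n d) pow (f a - g a)%R 2).

Definition f_interior n d (S : form n d -> Prop) (f : form n d) : Prop :=
  exists eps : R, (0 < eps)%R /\
    forall g : form n d, (dist_form f g < eps)%R -> S g.

Definition f_closure n d (S : form n d -> Prop) (f : form n d) : Prop :=
  forall eps : R, (0 < eps)%R ->
    exists g : form n d, S g /\ (dist_form f g < eps)%R.

Definition f_boundary n d (S : form n d -> Prop) (f : form n d) : Prop :=
  f_closure S f /\ ~ f_interior S f.

(* A real polynomial in the coefficients f_alpha, given as a finite sum of
   K monomials: phi(f) = sum_k c_k prod_alpha f_alpha^(e_k alpha). *)
Definition coeff_poly n d (K : nat) (c : 'I_K -> R)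
    (e : 'I_K -> mon n d -> nat) (f : form n d) : R :=
  \big[Rplus/0%R]_(k : 'I_K)
     Rmult (c k) (\big[Rmult/1%R]_(a : mon n d) pow (f a) (e k a)).

Definition sym_mx (m : nat) (A : 'I_m -> 'I_m -> R) : Prop :=
  forall i j, A i j = A j i.

Definition quad_form (m : nat) (A : 'I_m -> 'I_m -> R) (v : 'I_m -> R) : R :=
  \big[Rplus/0%R]_(i : 'I_m) \big[Rplus/0%R]_(j : 'I_m) Rmult (v i) (Rmult (A i j) (v j)).

Definition psd_mx (m : nat) (A : 'I_m -> 'I_m -> R) : Prop :=
  forall v : 'I_m -> R, (0 <= quad_form A v)%R.

Definition pd_mx (m : nat) (A : 'I_m -> 'I_m -> R) : Prop :=
  forall v : 'I_m -> R, (exists i, v i <> 0%R) -> (0 < quad_form A v)%R.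

Definition pencil n d (m : nat) (A : mon n d -> 'I_m -> 'I_m -> R)
    (f : form n d) : 'I_m -> 'I_m -> R :=
  fun i j => \big[Rplus/0%R]_(a : mon n d) Rmult (f a) (A a i j).

(* Main.v *)
From Pilot Require Import Defs.
From HB Require Import structures.
From mathcomp Require Import all_boot ssralg matrix.
From Stdlib Require Import Reals.
From Stdlib Require Import Lra Lia Psatz ClassicalEpsilon FunctionalExtensionality Classical.
Import Pilot.Defs.

Set Implicit Arguments.
Unset Strict Implicit.
Unset Printing Implicit Defensive.

Open Scope R_scope.

Definition Req_bool (x y : R) : bool := if Req_EM_T x y then true else false.
Lemma Req_boolP : Equality.axiom Req_bool.
Proof. move=> x y; rewrite /Req_bool; case: Req_EM_T => h; [by apply: ReflectT|by apply: ReflectF]. Qed.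
HB.instance Definition _ := hasDecEq.Build R Req_boolP.

Definition Rfind (P : pred R) (n : nat) : option R :=
  match excluded_middle_informative (exists x, P x) with
  | left h => Some (proj1_sig (constructive_indefinite_description _ h))
  | right _ => None
  end.
Lemma Rfind_correct P n x : Rfind P n = Some x -> P x.
Proof. rewrite /Rfind; case: excluded_middle_informative => // h [<-].
exact: (proj2_sig (constructive_indefinite_description _ h)). Qed.
Lemma Rfind_complete (P : pred R) : (exists x, P x) -> exists n, Rfind P n.
Proof. move=> h; exists O; rewrite /Rfind; case: excluded_middle_informative => //. Qed.
Lemma Rfind_ext (P Q : pred R) : P =1 Q -> Rfind P =1 Rfind Q.
Proof. move=> h; have -> : P = Q by apply: functional_extensionality. by []. Qed.
HB.instance Definition _ := hasChoice.Build R Rfind_correct Rfind_complete Rfind_ext.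

Lemma RaddA : associative Rplus. Proof. move=> *; ring. Qed.
Lemma RaddC : commutative Rplus. Proof. move=> *; ring. Qed.
Lemma Radd0 : left_id 0%R Rplus. Proof. move=> *; ring. Qed.
Lemma RaddN : left_inverse 0%R Ropp Rplus. Proof. move=> *; ring. Qed.
HB.instance Definition _ := GRing.isZmodule.Build R RaddA RaddC Radd0 RaddN.
Lemma RmulA : associative Rmult. Proof. move=> *; ring. Qed.
Lemma RmulC : commutative Rmult. Proof. move=> *; ring. Qed.
Lemma Rmul1 : left_id 1%R Rmult. Proof. move=> *; ring. Qed.
Lemma RmulD : left_distributive Rmult Rplus. Proof. move=> *; ring. Qed.
Lemma RmulDr : right_distributive Rmult Rplus. Proof. move=> *; ring. Qed.
Lemma Rmul0l : left_zero 0%R Rmult. Proof. move=> *; ring. Qed.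
Lemma Rmul0r : right_zero 0%R Rmult. Proof. move=> *; ring. Qed.
Lemma R1n0 : (1%R != 0%R :> R). Proof. apply/eqP; exact R1_neq_R0. Qed.
HB.instance Definition _ := GRing.Zmodule_isComNzRing.Build R RmulA RmulC Rmul1 RmulD R1n0.
Definition Rinvx (x : R) := if Req_bool x 0 then 0%R else Rinv x.
Lemma RmulV (x : R) : x != 0%R -> (Rinvx x * x = 1)%R.
Proof. rewrite /Rinvx => /eqP h; case: Req_boolP => // _; apply: Rinv_l h. Qed.
Lemma Rinv0x : Rinvx 0%R = 0%R. Proof. by rewrite /Rinvx; case: Req_boolP. Qed.
HB.instance Definition _ := GRing.ComNzRing_isField.Build R RmulV Rinv0x.

HB.instance Definition _ := Monoid.isComLaw.Build R 0%R Rplus RaddA RaddC Radd0.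
HB.instance Definition _ := Monoid.isComLaw.Build R 1%R Rmult RmulA RmulC Rmul1.
HB.instance Definition _ := Monoid.isMulLaw.Build R 0%R Rmult Rmul0l Rmul0r.
HB.instance Definition _ := Monoid.isAddLaw.Build R Rmult Rplus RmulD RmulDr.

Notation "\rsum_ ( i : T ) F" := (\big[Rplus/0%R]_(i : T) F)
  (at level 41, F at level 41, i at level 50, only parsing).

Fixpoint peval (l : list R) (t : R) : R :=
  match l with nil => 0 | a :: l' => a + t * peval l' t end.
Definition is_poly (g : R -> R) := exists l, forall t, g t = peval l t.

Fixpoint padd (l1 l2 : list R) : list R :=
  match l1, l2 with
  | nil, _ => l2
  | _, nil => l1
  | a :: l1', b :: l2' => (a + b) :: padd l1' l2'
  end.
Lemma peval_add l1 l2 t : peval (padd l1 l2) t = peval l1 t + peval l2 t.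
Proof.
elim: l1 l2 => [|a l1 IH] [|b l2] /=; try ring. rewrite IH; ring.
Qed.
Definition pscale c (l : list R) := List.map (Rmult c) l.
Lemma peval_scale c l t : peval (pscale c l) t = c * peval l t.
Proof. elim: l => [|a l IH] /=; [ring|rewrite IH; ring]. Qed.
Fixpoint pmul (l1 l2 : list R) : list R :=
  match l1 with nil => nil | a :: l1' => padd (pscale a l2) (0 :: pmul l1' l2) end.
Lemma peval_mul l1 l2 t : peval (pmul l1 l2) t = peval l1 t * peval l2 t.
Proof.
elim: l1 => [|a l1 IH] /=; first ring.
rewrite peval_add peval_scale /= IH; ring.
Qed.

Lemma is_poly_ext g h : (forall t, g t = h t) -> is_poly g -> is_poly h.
Proof. move=> E [l Hl]; exists l => t; by rewrite -E. Qed.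
Lemma is_poly_const c : is_poly (fun _ => c).
Proof. exists [:: c] => t /=; ring. Qed.
Lemma is_poly_id : is_poly (fun t => t).
Proof. exists [:: 0; 1] => t /=; ring. Qed.
Lemma is_poly_add g h : is_poly g -> is_poly h -> is_poly (fun t => g t + h t).
Proof. move=> [l1 H1] [l2 H2]; exists (padd l1 l2) => t; by rewrite peval_add H1 H2. Qed.
Lemma is_poly_mul g h : is_poly g -> is_poly h -> is_poly (fun t => g t * h t).
Proof. move=> [l1 H1] [l2 H2]; exists (pmul l1 l2) => t; by rewrite peval_mul H1 H2. Qed.
Lemma is_poly_pow g k : is_poly g -> is_poly (fun t => g t ^ k).
Proof.
move=> Hg; elim: k => [|k IH] /=; first exact: is_poly_const.
exact: is_poly_mul.
Qed.
Lemma is_poly_big (I : Type) (s : seq I) (P : pred I) (F : I -> R -> R)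
   (op : R -> R -> R) (idx : R) :
  (forall g h, is_poly g -> is_poly h -> is_poly (fun t => op (g t) (h t))) ->
  (forall i, is_poly (F i)) ->
  is_poly (fun t => \big[op/idx]_(i <- s | P i) F i t).
Proof.
move=> Hop HF; elim: s => [|i s IH].
  apply: (is_poly_ext _ (is_poly_const idx)) => t; by rewrite big_nil.
case Pi: (P i).
  apply: (is_poly_ext _ (Hop _ _ (HF i) IH)) => t; by rewrite big_cons Pi.
apply: (is_poly_ext _ IH) => t; by rewrite big_cons Pi.
Qed.

Lemma peval_bound l : exists B, 0 <= B /\ forall t, Rabs t <= 1 -> Rabs (peval l t) <= B.
Proof.
elim: l => [|a l [B [B0 HB]]] /=.
  exists 0; split; [lra|] => t _; rewrite Rabs_R0; lra.
exists (Rabs a + B); split; first by have := Rabs_pos a; lra.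
move=> t Ht; apply: Rle_trans (Rabs_triang _ _) _.
rewrite Rabs_mult; apply: Rplus_le_compat_l.
have := HB t Ht; have := Rabs_pos t; have := Rabs_pos (peval l t); nra.
Qed.

Lemma peval_zero l : (forall t, 0 < t -> peval l t = 0) -> forall t, peval l t = 0.
Proof.
elim: l => [|a l IH] H t //=.
have Ha : a = 0.
  have [B [B0 HB]] := peval_bound l.
  apply: NNPP => Ha.
  have Hpa : 0 < Rabs a by apply: Rabs_pos_lt.
  set t0 := Rmin 1 (Rabs a / (2 * (B + 1))).
  have Ht0 : 0 < t0.
    apply: Rmin_pos; [lra|]. apply: Rdiv_lt_0_compat; lra.
  have Ht1 : t0 <= 1 by apply: Rmin_l.
  have Ht2 : t0 <= Rabs a / (2 * (B + 1)) by apply: Rmin_r.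
  have E := H t0 Ht0; simpl in E.
  have Eb := HB t0 ltac:(rewrite Rabs_pos_eq; lra).
  have Ea0 : Rabs a = Rabs t0 * Rabs (peval l t0).
    rewrite -Rabs_mult; have -> : a = - (t0 * peval l t0) by lra.
    by rewrite Rabs_Ropp.
  have Ea : Rabs a = t0 * Rabs (peval l t0).
    by rewrite Ea0 (Rabs_pos_eq t0); last lra.
  have : t0 * (2 * (B + 1)) <= Rabs a.
    have := Rmult_le_compat_r (2 * (B+1)) _ _ ltac:(lra) Ht2.
    rewrite /Rdiv Rmult_assoc Rinv_l; lra.
  have := Rabs_pos (peval l t0). nra.
have Hl : forall t, 0 < t -> peval l t = 0.
  move=> s Hs; have := H s Hs; simpl; rewrite Ha => E.
  have : s * peval l s = 0 by lra.
  case/Rmult_integral => //; lra.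
rewrite Ha (IH Hl t); ring.
Qed.

Lemma is_poly_zero g : is_poly g -> (forall t, 0 < t -> g t = 0) -> forall t, g t = 0.
Proof.
move=> [l Hl] H t; rewrite Hl; apply: peval_zero => s Hs; by rewrite -Hl H.
Qed.

Lemma sum_delta (T : finType) (b : T) (F : T -> R) :
  \big[Rplus/0]_(a : T) ((if a == b then 1 else 0) * F a) = F b.
Proof.
rewrite (bigD1 b) //= eqxx big1 => [|a /negbTE ->]; ring.
Qed.

Lemma sum_delta_r (T : finType) (b : T) (F : T -> R) :
  \big[Rplus/0]_(a : T) (F a * (if a == b then 1 else 0)) = F b.
Proof.
rewrite -(sum_delta b F); apply: eq_bigr => a _; ring.
Qed.

Lemma sum_nonneg (I : Type) (s : seq I) (P : pred I) (F : I -> R) :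
  (forall i, P i -> 0 <= F i) -> 0 <= \big[Rplus/0]_(i <- s | P i) F i.
Proof. move=> H; apply: big_ind => //; [lra| move=> x y; lra]. Qed.

Lemma sum_le (I : Type) (s : seq I) (P : pred I) (F G : I -> R) :
  (forall i, P i -> F i <= G i) ->
  \big[Rplus/0]_(i <- s | P i) F i <= \big[Rplus/0]_(i <- s | P i) G i.
Proof. move=> H; apply: (big_ind2 (fun x y => x <= y)) => //; [lra| move=> *; lra]. Qed.

Lemma prod_le (I : Type) (s : seq I) (P : pred I) (F G : I -> R) :
  (forall i, P i -> 0 <= F i <= G i) ->
  0 <= \big[Rmult/1]_(i <- s | P i) F i <= \big[Rmult/1]_(i <- s | P i) G i.
Proof.
move=> H; apply: (big_ind2 (fun x y => 0 <= x <= y)) => //; first lra.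
move=> x1 x2 y1 y2 [h1 h2] [h3 h4]; split; first nra.
apply: Rmult_le_compat => //.
Qed.

Lemma sum_abs_le (I : Type) (s : seq I) (P : pred I) (F : I -> R) :
  Rabs (\big[Rplus/0]_(i <- s | P i) F i) <= \big[Rplus/0]_(i <- s | P i) Rabs (F i).
Proof.
apply: (big_ind2 (fun x y => Rabs x <= y)) => //.
  rewrite Rabs_R0; lra.
  move=> x1 x2 y1 y2 h1 h2; apply: Rle_trans (Rabs_triang _ _) _; lra.
move=> *; lra.
Qed.

Lemma term_le_sum (T : finType) (b : T) (F : T -> R) :
  (forall a, 0 <= F a) -> F b <= \big[Rplus/0]_(a : T) F a.
Proof.
move=> H; rewrite (bigD1 b) //=.
have := @sum_nonneg _ (index_enum T) (fun a => a != b) F (fun a _ => H a); lra.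
Qed.

Lemma pow_double_nonneg x m : 0 <= x ^ (m.*2).
Proof.
elim: m => [|m IH]; first (simpl; lra).
rewrite doubleS /=; nra.
Qed.

Lemma pow_even_nonneg x k : ~~ odd k -> 0 <= x ^ k.
Proof.
move=> Hk; rewrite -(odd_double_half k) (negbTE Hk) add0n; exact: pow_double_nonneg.
Qed.

Section Forms.
Variables n d : nat.

Definition mono (a : mon n d) (u : 'I_n -> R) : R :=
  \big[Rmult/1]_(i : 'I_n) pow (u i) (mexp a i).

Lemma eval_formE (f : form n d) u :
  eval_form f u = \big[Rplus/0]_(a : mon n d) (f a * mono a u).
Proof. by []. Qed.

Definition delta (b : mon n d) : form n d := fun a => if a == b then 1 else 0.
Definition fadd (f g : form n d) : form n d := fun a => f a + g a.
Definition fscale (c : R) (f : form n d) : form n d := fun a => c * f a.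

Lemma eval_delta b u : eval_form (delta b) u = mono b u.
Proof. rewrite eval_formE /delta; exact: sum_delta. Qed.

Lemma eval_fadd f g u : eval_form (fadd f g) u = eval_form f u + eval_form g u.
Proof.
rewrite !eval_formE -big_split /=; apply: eq_bigr => a _; rewrite /fadd; ring.
Qed.

Lemma eval_fscale c f u : eval_form (fscale c f) u = c * eval_form f u.
Proof.
rewrite !eval_formE big_distrr /=; apply: eq_bigr => a _; rewrite /fscale; ring.
Qed.

Lemma eval_fsum (I : finType) (P : pred I) (F : I -> form n d) u :
  eval_form (fun a => \big[Rplus/0]_(i | P i) F i a) u =
  \big[Rplus/0]_(i | P i) eval_form (F i) u.
Proof.
rewrite eval_formE.
under eq_bigr => a _ do rewrite big_distrl /=.
rewrite exchange_big /=; apply: eq_bigr => i _; by rewrite eval_formE.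
Qed.

Definition e2 (i0 i1 : 'I_n) (p q : nat) (j : 'I_n) : nat :=
  ((j == i0) * p + (j == i1) * q)%nat.

Lemma sum_indic (i0 : 'I_n) p : (\sum_(j : 'I_n) (j == i0) * p)%nat = p.
Proof.
rewrite (bigD1 i0) //= eqxx mul1n big1 ?addn0 // => j /negbTE ->; by rewrite mul0n.
Qed.

Lemma sum_e2 i0 i1 p q : (\sum_(j : 'I_n) e2 i0 i1 p q j)%nat = (p + q)%nat.
Proof. by rewrite big_split /= !sum_indic. Qed.

Lemma e2_le i0 i1 p q j : (e2 i0 i1 p q j <= p + q)%nat.
Proof.
rewrite /e2; case: (j == i0); case: (j == i1);
  rewrite ?mul1n ?mul0n ?addn0 ?add0n ?leq_addr ?leq_addl //.
Qed.

Lemma mon2_proof i0 i1 p q (H : (p + q)%nat = d) :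
  (\sum_(i : 'I_n) (([ffun j => inord (e2 i0 i1 p q j)] : {ffun 'I_n -> 'I_d.+1}) i : nat))%nat == d.
Proof.
apply/eqP; transitivity (p + q)%nat; last exact: H.
rewrite -(sum_e2 i0 i1 p q); apply: eq_bigr => j _.
rewrite ffunE inordK // ltnS -H; exact: e2_le.
Qed.

Definition mon2 i0 i1 p q (H : (p + q)%nat = d) : mon n d :=
  exist (fun a : {ffun 'I_n -> 'I_d.+1} => (\sum_(i : 'I_n) (a i : nat))%nat == d) [ffun j => inord (e2 i0 i1 p q j)] (mon2_proof i0 i1 H).

Lemma mexp_mon2 i0 i1 p q (H : (p + q)%nat = d) j : mexp (mon2 i0 i1 H) j = e2 i0 i1 p q j.
Proof.
rewrite /mexp /= ffunE inordK // ltnS -H; exact: e2_le.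
Qed.

Lemma prod_indic (i0 : 'I_n) p (u : 'I_n -> R) :
  \big[Rmult/1]_(j : 'I_n) u j ^ ((j == i0) * p) = u i0 ^ p.
Proof.
rewrite (bigD1 i0) //= eqxx mul1n big1 => [|j /negbTE ->]; rewrite ?mul0n /=; ring.
Qed.

Lemma mono_mon2 i0 i1 p q (H : (p + q)%nat = d) u :
  mono (mon2 i0 i1 H) u = u i0 ^ p * u i1 ^ q.
Proof.
rewrite /mono.
under eq_bigr => j _ do rewrite mexp_mon2 /e2 pow_add.
by rewrite big_split /= !prod_indic.
Qed.

End Forms.

Lemma big_max_ge (I : eqType) (s : seq I) (F : I -> R) i :
  i \in s -> F i <= \big[Rmax/0]_(j <- s) F j.
Proof.
elim: s => [|x s IH] //; rewrite in_cons big_cons => /orP [/eqP -> | /IH h].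
  exact: Rmax_l.
apply: Rle_trans h (Rmax_r _ _).
Qed.

Lemma big_max_att (I : Type) (s : seq I) (F : I -> R) :
  \big[Rmax/0]_(j <- s) F j = 0 \/ exists j, \big[Rmax/0]_(j <- s) F j = F j.
Proof.
apply: (big_ind (fun x => x = 0 \/ exists j, x = F j)); first by left.
  move=> x y Hx Hy; rewrite /Rmax; by case: Rle_dec.
move=> j _; right; by exists j.
Qed.

Section Family.
Variables (n k : nat).
Hypothesis hn : (2 <= n)%nat.
Hypothesis hk : ~~ odd k.
Local Notation d := (k + 4)%nat.

Lemma hd_even : ~~ odd d.
Proof. rewrite oddD /=; by rewrite addbF. Qed.

Definition ix : 'I_n := @Ordinal n 0 (leq_trans (isT : (1 <= 2)%nat) hn).
Definition iy : 'I_n := @Ordinal n 1 hn.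
Lemma ix_iy : ix != iy. Proof. by []. Qed.
Lemma iy_ix : (iy == ix) = false. Proof. by []. Qed.

Lemma H1 : ((k + 4) + 0 = d)%nat. Proof. rewrite -!plusE; lia. Qed.
Lemma H2 : (4 + k = d)%nat. Proof. rewrite -!plusE; lia. Qed.
Lemma H3 : ((k + 2) + 2 = d)%nat. Proof. rewrite -!plusE; lia. Qed.
Lemma H4 : (2 + (k + 2) = d)%nat. Proof. rewrite -!plusE; lia. Qed.
Lemma H5 : (k + 4 = d)%nat. Proof. rewrite -!plusE; lia. Qed.
Lemma H6 : (0 + (k + 4) = d)%nat. Proof. rewrite -!plusE; lia. Qed.

Definition m1 := mon2 ix iy H1.
Definition m2 := mon2 ix iy H2.
Definition m3 := mon2 ix iy H3.
Definition m4 := mon2 ix iy H4.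
Definition m5 := mon2 ix iy H5.
Definition m6 := mon2 ix iy H6.
Definition pw (i : 'I_n) := mon2 i i H1.

Definition Pr (i : 'I_n) := (i != ix) && (i != iy).

Definition Gf : form n d := fun a => \big[Rplus/0]_(i | Pr i) delta (pw i) a.

Definition fam (r : R) : form n d :=
  fadd (fadd (fadd (fadd (fadd (fadd (delta m1) (delta m2))
     (fscale (-2 * r) (delta m3))) (fscale (-2 * r) (delta m4)))
     (fscale (r ^ 2) (delta m5))) (fscale (r ^ 2) (delta m6))) Gf.

Definition pval (r : R) (u : 'I_n -> R) : R :=
  (u ix ^ 2 - r * u iy ^ 2) ^ 2 * (u ix ^ k + u iy ^ k) +
  \big[Rplus/0]_(i | Pr i) u i ^ d.

Lemma eval_fam r u : eval_form (fam r) u = pval r u.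
Proof.
rewrite /fam /Gf !eval_fadd !eval_fscale !eval_delta eval_fsum.
under eq_bigr => i _ do rewrite eval_delta mono_mon2 /= Rmult_1_r.
rewrite !mono_mon2 /pval !pow_add /=; ring.
Qed.

Lemma pval_nonneg r u : 0 <= pval r u.
Proof.
rewrite /pval; apply: Rplus_le_le_0_compat.
  apply: Rmult_le_pos; first by apply: pow_even_nonneg.
  apply: Rplus_le_le_0_compat; exact: pow_even_nonneg.
apply: sum_nonneg => i _; apply: pow_even_nonneg; exact: hd_even.
Qed.

Lemma Pnd_fam r : Pnd (fam r).
Proof. move=> u; rewrite eval_fam; exact: pval_nonneg. Qed.

Definition u0 (r : R) : 'I_n -> R :=
  fun i => if i == ix then sqrt r else if i == iy then 1 else 0.

Lemma pval_u0 r : 0 < r -> pval r (u0 r) = 0.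
Proof.
move=> Hr; rewrite /pval /u0 !eqxx iy_ix.
rewrite big1 => [|i /andP [/negbTE -> /negbTE ->]]; last by rewrite pow_i //; rewrite -!plusE; lia.
rewrite pow2_sqrt; [ring|lra].
Qed.

Lemma mono_pw_u0 r : mono (pw iy) (u0 r) = 1.
Proof.
rewrite mono_mon2 /u0 iy_ix eqxx pow1 /=; ring.
Qed.

Lemma dist_pert (f : form n d) (b : mon n d) c :
  dist_form f (fadd f (fscale c (delta b))) = Rabs c.
Proof.
rewrite /dist_form.
have -> : \big[Rplus/0]_(a : mon n d) (f a - fadd f (fscale c (delta b)) a) ^ 2 =
          \big[Rplus/0]_(a : mon n d) (c ^ 2 * (if a == b then 1 else 0)).
  apply: eq_bigr => a _; rewrite /fadd /fscale /delta; case: (a == b); ring.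
rewrite sum_delta_r -pow2_abs sqrt_pow2 //; exact: Rabs_pos.
Qed.

Lemma fam_boundary r : 0 < r -> f_boundary (@Pnd n d) (fam r).
Proof.
move=> Hr; split.
  move=> eps He; exists (fam r); split; first exact: Pnd_fam.
  rewrite /dist_form big1 => [|a _]; last ring.
  rewrite sqrt_0; lra.
move=> [eps [He H]].
have Hg := H (fadd (fam r) (fscale (- (eps / 2)) (delta (pw iy)))).
have : 0 <= eval_form (fadd (fam r) (fscale (- (eps / 2)) (delta (pw iy)))) (u0 r).
  apply: Hg; rewrite dist_pert Rabs_Ropp Rabs_pos_eq; lra.
rewrite eval_fadd eval_fscale eval_delta eval_fam pval_u0 // mono_pw_u0; lra.
Qed.

Definition Nu (u : 'I_n -> R) := \big[Rplus/0]_(i : 'I_n) u i ^ d.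

Lemma Nu_nonneg u : 0 <= Nu u.
Proof. apply: sum_nonneg => i _; apply: pow_even_nonneg; exact: hd_even. Qed.

Lemma Nu_split u : Nu u = u ix ^ d + u iy ^ d + \big[Rplus/0]_(i | Pr i) u i ^ d.
Proof.
rewrite /Nu (bigD1 ix) //= (bigD1 iy) ?iy_ix //=.
rewrite Rplus_assoc; congr (_ + (_ + _)); apply: eq_bigl => i; try by rewrite /Pr andbC.
Qed.

Lemma pval_ge u : Nu u <= pval (-1) u.
Proof.
rewrite Nu_split /pval.
have HX := pow_even_nonneg (u ix) hk.
have HY := pow_even_nonneg (u iy) hk.
set X := u ix ^ k in HX *; set Y := u iy ^ k in HY *.
have -> : u ix ^ d = u ix ^ 4 * X by rewrite addnC pow_add.
have -> : u iy ^ d = u iy ^ 4 * Y by rewrite addnC pow_add.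
set x := u ix; set y := u iy.
have E : (x ^ 2 - -1 * y ^ 2) ^ 2 * (X + Y) - (x ^ 4 * X + y ^ 4 * Y)
       = (2 * (x * y) ^ 2 + y ^ 4) * X + (x ^ 4 + 2 * (x * y) ^ 2) * Y by ring.
have P1 : 0 <= (2 * (x * y) ^ 2 + y ^ 4) * X.
  apply: Rmult_le_pos => //; have := pow2_ge_0 (x * y); have := pow_even_nonneg y (isT : ~~ odd 4); lra.
have P2 : 0 <= (x ^ 4 + 2 * (x * y) ^ 2) * Y.
  apply: Rmult_le_pos => //; have := pow2_ge_0 (x * y); have := pow_even_nonneg x (isT : ~~ odd 4); lra.
lra.
Qed.

Lemma mono_bound (a : mon n d) u : Rabs (mono a u) <= Nu u.
Proof.
set m := \big[Rmax/0]_(i <- index_enum 'I_n) Rabs (u i).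
have Hm : forall i, Rabs (u i) <= m.
  move=> i; apply: (big_max_ge (fun j => Rabs (u j))); exact: mem_index_enum.
have Hm0 : 0 <= m by apply: Rle_trans (Rabs_pos (u ix)) (Hm ix).
have E1 : Rabs (mono a u) = \big[Rmult/1]_(i : 'I_n) (Rabs (u i) ^ mexp a i).
  rewrite /mono (big_morph Rabs Rabs_mult Rabs_R1); apply: eq_bigr => i _.
  by rewrite RPow_abs.
have E2 : \big[Rmult/1]_(i : 'I_n) (m ^ mexp a i) = m ^ d.
  rewrite -(big_morph (pow m) (fun x y => pow_add m x y) (pow_O m)).
  congr (m ^ _); apply/eqP; exact: (proj2_sig a).
have L1 : \big[Rmult/1]_(i : 'I_n) (Rabs (u i) ^ mexp a i) <= m ^ d.
  rewrite -E2; apply: (proj2 (prod_le (index_enum _) _)) => i _; split.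
    apply: pow_le; exact: Rabs_pos.
  apply: pow_incr; split; [exact: Rabs_pos | exact: Hm].
rewrite E1; apply: Rle_trans L1 _.
have [E|[j E]] : m = 0 \/ exists j, m = Rabs (u j) := big_max_att _ _; rewrite E.
  rewrite pow_i; [exact: Nu_nonneg | rewrite -!plusE; lia].
rewrite RPow_abs Rabs_pos_eq; last by apply: pow_even_nonneg; exact: hd_even.
rewrite /Nu; apply: term_le_sum => i; apply: pow_even_nonneg; exact: hd_even.
Qed.

Lemma fam_interior : f_interior (@Pnd n d) (fam (-1)).
Proof.
set f := fam (-1).
set K := \big[Rplus/0]_(a : mon n d) 1.
have HK : 0 <= K by apply: sum_nonneg => a _; lra.
have Heps : 0 < 1 / (K + 1) by apply: Rdiv_lt_0_compat; lra.
have Hq : 1 / (K + 1) * K <= 1.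
  apply: (Rmult_le_reg_l (K + 1)); first lra.
  have -> : (K + 1) * (1 / (K + 1) * K) = K by field; lra.
  lra.
exists (1 / (K + 1)); split => // g Hg u.
have Hab : forall a, Rabs (g a - f a) <= dist_form f g.
  move=> a; rewrite Rabs_minus_sym /dist_form -(sqrt_pow2 (Rabs _)); last exact: Rabs_pos.
  rewrite pow2_abs; apply: sqrt_le_1_alt.
  apply: term_le_sum => b; exact: pow2_ge_0.
set S := \big[Rplus/0]_(a : mon n d) ((g a - f a) * mono a u).
have E : eval_form g u = eval_form f u + S.
  rewrite !eval_formE /S -big_split; apply: eq_bigr => a _ /=; ring.
have B : Rabs S <= 1 / (K + 1) * Nu u * K.
  apply: Rle_trans (sum_abs_le _ _ _) _.
  apply: Rle_trans (sum_le (G := fun _ => 1 / (K + 1) * Nu u) _ _) _.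
    move=> a _; rewrite Rabs_mult; apply: Rmult_le_compat;
      [exact: Rabs_pos|exact: Rabs_pos| |exact: mono_bound].
    have := Hab a; lra.
  have -> : 1 / (K + 1) * Nu u * K =
     \big[Rplus/0]_(a : mon n d) (1 / (K + 1) * Nu u * 1) by rewrite -big_distrr.
  apply: Req_le; apply: eq_bigr => a _; ring.
rewrite E /f eval_fam.
have := pval_ge u; have := Nu_nonneg u.
have := Rle_abs (- S); rewrite Rabs_Ropp => HS HN Hp.
have : 1 / (K + 1) * Nu u * K <= Nu u.
  have -> : 1 / (K + 1) * Nu u * K = Nu u * (1 / (K + 1) * K) by ring.
  have := Rmult_le_compat_l (Nu u) _ _ HN Hq; lra.
lra.
Qed.

End Family.

Definition lin m (p v : 'I_m -> R) := \big[Rplus/0]_(i : 'I_m) (p i * v i).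
Definition wid m (i : 'I_m) : 'I_m.+1 := widen_ord (leqnSn m) i.

Lemma wid_max m (i : 'I_m) : (wid i == ord_max) = false.
Proof. by rewrite -val_eqE /= ltn_eqF. Qed.

Lemma q_zero m (M : 'I_m -> 'I_m -> R) v : (forall i, v i = 0) -> quad_form M v = 0.
Proof.
move=> H; rewrite /quad_form big1 // => i _; rewrite big1 // => j _; rewrite H; ring.
Qed.

Lemma lin_zero m (p v : 'I_m -> R) : (forall i, v i = 0) -> lin p v = 0.
Proof. move=> H; rewrite /lin big1 // => i _; rewrite H; ring. Qed.

Lemma lin_comb m (p p' v : 'I_m -> R) c :
  lin (fun i => p i + c * p' i) v = lin p v + c * lin p' v.
Proof.
rewrite /lin big_distrr -big_split /=; apply: eq_bigr => i _; ring.
Qed.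

Lemma q_rank1 m (A : 'I_m -> 'I_m -> R) (p p' v : 'I_m -> R) c :
  quad_form (fun i j => A i j + c * (p i * p' j)) v =
  quad_form A v + c * lin p v * lin p' v.
Proof.
rewrite /quad_form /lin.
transitivity (\big[Rplus/0]_(i : 'I_m) (\big[Rplus/0]_(j : 'I_m) (v i * (A i j * v j))
   + (c * (p i * v i)) * \big[Rplus/0]_(j : 'I_m) (p' j * v j))).
  apply: eq_bigr => i _; rewrite big_distrr -big_split /=; apply: eq_bigr => j _; ring.
rewrite big_split /= -big_distrl /= -big_distrr /=; ring.
Qed.

Lemma q_sub m (M B : 'I_m -> 'I_m -> R) v s :
  quad_form (fun i j => M i j - s * B i j) v = quad_form M v - s * quad_form B v.
Proof.
rewrite /quad_form.
transitivity (\big[Rplus/0]_(i : 'I_m) (\big[Rplus/0]_(j : 'I_m) (v i * (M i j * v j))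
   + (- s) * \big[Rplus/0]_(j : 'I_m) (v i * (B i j * v j)))).
  apply: eq_bigr => i _; rewrite big_distrr -big_split /=; apply: eq_bigr => j _; ring.
rewrite big_split /= -big_distrr /=; ring.
Qed.

Lemma qsplit m (M : 'I_m.+1 -> 'I_m.+1 -> R) v :
  quad_form M v = quad_form (fun i j => M (wid i) (wid j)) (fun i => v (wid i))
     + 2 * v ord_max * lin (fun i => (M (wid i) ord_max + M ord_max (wid i)) / 2)
                           (fun i => v (wid i))
     + M ord_max ord_max * v ord_max ^ 2.
Proof.
rewrite /quad_form big_ord_recr /= big_ord_recr /=.
under eq_bigr => i _ do rewrite big_ord_recr /=.
rewrite big_split /=.
have E : \big[Rplus/0]_(i < m) (v (widen_ord (leqnSn m) i) *
             (M (widen_ord (leqnSn m) i) ord_max * v ord_max)) +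
         \big[Rplus/0]_(i < m) (v ord_max * (M ord_max (widen_ord (leqnSn m) i) *
             v (widen_ord (leqnSn m) i))) =
         2 * v ord_max * lin (fun i => (M (wid i) ord_max + M ord_max (wid i)) / 2)
                           (fun i => v (wid i)).
  rewrite /lin big_distrr -big_split /=; apply: eq_bigr => i _; rewrite /wid; field.
rewrite -E /wid.
set Y1 := \big[Rplus/0]_(i < m) (v ord_max * _).
set Y2 := \big[Rplus/0]_(i < m) (v (widen_ord (leqnSn m) i) * (M _ ord_max * _)).
ring.
Qed.

Definition ext m (v' : 'I_m -> R) (x : R) : 'I_m.+1 -> R :=
  fun k => if unlift ord_max k is Some i then v' i else x.

Lemma ext_wid m (v' : 'I_m -> R) x i : ext v' x (wid i) = v' i.
Proof.
have -> : wid i = lift ord_max i by apply: val_inj; rewrite /= /bump leqNgt ltn_ord.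
by rewrite /ext liftK.
Qed.

Lemma ext_max m (v' : 'I_m -> R) x : ext v' x ord_max = x.
Proof. by rewrite /ext unlift_none. Qed.

Lemma pd_psd m (M : 'I_m -> 'I_m -> R) : pd_mx M -> psd_mx M.
Proof.
move=> H v; case: (classic (exists i, v i <> 0)) => [h|h].
  exact: Rlt_le (H v h).
rewrite q_zero; first lra.
move=> i; apply: NNPP => hi; apply: h; by exists i.
Qed.

Lemma coerc m : forall (M B : 'I_m -> 'I_m -> R), pd_mx M ->
  exists s, 0 < s /\ psd_mx (fun i j => M i j - s * B i j).
Proof.
elim: m => [|m IH] M B HM.
  exists 1; split; first lra.
  move=> v; rewrite /quad_form big_ord0; lra.
set a := M ord_max ord_max.
set b := fun i => (M (wid i) ord_max + M ord_max (wid i)) / 2.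
set M' := fun i j => M (wid i) (wid j).
have Ha : 0 < a.
  set e := fun i : 'I_m.+1 => if i == ord_max then 1 else 0.
  have he : exists i, e i <> 0 by exists ord_max; rewrite /e eqxx; lra.
  have := HM e he.
  have E0 : forall i, e (wid i) = 0 by move=> i; rewrite /e wid_max.
  rewrite qsplit (q_zero _ E0) (lin_zero _ E0) /e eqxx -/a /= => h; nra.
set S := fun i j => M' i j + (-1 / a) * (b i * b j).
have HS : pd_mx S.
  move=> v' hv'.
  set x := - lin b v' / a.
  have hv : exists i, ext v' x i <> 0.
    case: hv' => i hi; exists (wid i); by rewrite ext_wid.
  have := HM _ hv; rewrite qsplit ext_max.
  have -> : (fun i => ext v' x (wid i)) = v' by apply: functional_extensionality => i; rewrite ext_wid.
  rewrite /S q_rank1 -/a -/b -/M' /x; move=> h.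
  have E : quad_form M' v' + 2 * (- lin b v' / a) * lin b v' + a * (- lin b v' / a) ^ 2
           = quad_form M' v' + -1 / a * lin b v' * lin b v' by field; lra.
  lra.
set β := B ord_max ord_max.
set c := fun i => (B (wid i) ord_max + B ord_max (wid i)) / 2.
set B' := fun i j => B (wid i) (wid j).
set dd := fun i => c i + (- β / a) * b i.
set Bst := fun i j =>
  ((fun i j => (fun i j => B' i j + (-2 / a) * (b i * c j)) i j + (β / a ^ 2) * (b i * b j)) i j)
    + 1 * (dd i * dd j).
have [s' [Hs' Hpsd]] := IH S Bst HS.
have HSp := pd_psd HS.
set s := Rmin s' (a / (Rabs β + 1)).
have Hs0 : 0 < s.
  apply: Rmin_pos => //; apply: Rdiv_lt_0_compat => //; have := Rabs_pos β; lra.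
have Hs1 : s <= s' by apply: Rmin_l.
have Hs2 : s <= a / (Rabs β + 1) by apply: Rmin_r.
have Hs3 : s * (Rabs β + 1) <= a.
  have Hb1 : 0 < Rabs β + 1 by have := Rabs_pos β; lra.
  have := Rmult_le_compat_r (Rabs β + 1) _ _ (Rlt_le _ _ Hb1) Hs2.
  have -> : a / (Rabs β + 1) * (Rabs β + 1) = a by field; lra.
  done.
exists s; split => // v.
rewrite q_sub.
set v' := fun i => v (wid i).
set L1 := lin b v'.
set L2 := lin c v'.
set y := v ord_max + L1 / a.
have EM : quad_form M v = a * y ^ 2 + quad_form S v'.
  rewrite qsplit /S q_rank1 -/a -/b -/M' -/v' -/L1 /y; field; lra.
have EB : quad_form B v = β * y ^ 2 + 2 * y * (L2 - β * L1 / a) +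
     (quad_form B' v' - 2 / a * L1 * L2 + β / a ^ 2 * L1 ^ 2).
  rewrite qsplit -/β -/c -/B' -/v' -/L2 /y; field; lra.
have EBst : quad_form Bst v' = quad_form B' v' - 2 / a * L1 * L2 + β / a ^ 2 * L1 ^ 2
     + (L2 - β * L1 / a) ^ 2.
  rewrite /Bst !q_rank1 /dd lin_comb -/L1 -/L2; field; lra.
have H1 := Hpsd v'; rewrite q_sub in H1.
have H2 := HSp v'.
set D := L2 - β * L1 / a.
have Hyd : 2 * y * D <= y ^ 2 + D ^ 2 by have := pow2_ge_0 (y - D); nra.
have Hbeta : β * y ^ 2 <= Rabs β * y ^ 2.
  apply: Rmult_le_compat_r; [exact: pow2_ge_0 | exact: Rle_abs].
have HqB : quad_form B v <= (Rabs β + 1) * y ^ 2 + quad_form Bst v'.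
  rewrite EB EBst -/D; lra.
have Hy2 := pow2_ge_0 y.
have T1 : s * quad_form B v <= s * (Rabs β + 1) * y ^ 2 + s * quad_form Bst v'.
  have := Rmult_le_compat_l s _ _ (Rlt_le _ _ Hs0) HqB; lra.
have T2 : s * (Rabs β + 1) * y ^ 2 <= a * y ^ 2 by apply: Rmult_le_compat_r.
have T3 : s * quad_form Bst v' <= quad_form S v'.
  (* convexity *)
  have E3 : quad_form S v' - s * quad_form Bst v' =
            (1 - s / s') * quad_form S v' + s / s' * (quad_form S v' - s' * quad_form Bst v')
    by field; lra.
  have P1 : 0 <= 1 - s / s'.
    have : s / s' <= 1.
      apply: (Rmult_le_reg_r s') => //; have -> : s / s' * s' = s by field; lra.
      lra.
    lra.
  have P2 : 0 <= s / s' by apply: Rlt_le; apply: Rdiv_lt_0_compat; lra.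
  have := Rmult_le_pos _ _ P1 H2; have := Rmult_le_pos _ _ P2 H1; lra.
rewrite EM; lra.
Qed.

Definition bil m (M : 'I_m -> 'I_m -> R) (v w : 'I_m -> R) :=
  \big[Rplus/0]_(i : 'I_m) \big[Rplus/0]_(j : 'I_m) (v i * (M i j * w j)).

Lemma sum_comb3 (T : finType) (A B C D : T -> R) c :
  \big[Rplus/0]_(a : T) (A a + c * (B a + C a) + c ^ 2 * D a) =
  \big[Rplus/0]_(a : T) A a + c * (\big[Rplus/0]_(a : T) B a + \big[Rplus/0]_(a : T) C a)
  + c ^ 2 * \big[Rplus/0]_(a : T) D a.
Proof.
rewrite !big_split /= -!big_distrr /= big_split /=; reflexivity.
Qed.

Lemma q_pert m (M : 'I_m -> 'I_m -> R) v w c :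
  quad_form M (fun i => v i + c * w i) =
  quad_form M v + c * (bil M v w + bil M w v) + c ^ 2 * quad_form M w.
Proof.
rewrite /quad_form /bil -sum_comb3; apply: eq_bigr => i _.
rewrite -sum_comb3; apply: eq_bigr => j _; ring.
Qed.

Lemma kernel m (M : 'I_m -> 'I_m -> R) v :
  (forall i j, M i j = M j i) -> psd_mx M -> quad_form M v = 0 ->
  forall j, \big[Rplus/0]_(i : 'I_m) (v i * M i j) = 0.
Proof.
move=> Hs Hp Hq j.
set w := fun i : 'I_m => if i == j then 1 else 0.
set X := \big[Rplus/0]_(i : 'I_m) (v i * M i j).
have E1 : bil M v w = X.
  rewrite /bil /X /w.
  under eq_bigr => i _ do under eq_bigr => k _ do rewrite -Rmult_assoc.
  by under eq_bigr => i _ do rewrite (sum_delta_r j (fun k => v i * M i k)).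
have E2 : bil M w v = X.
  rewrite /bil /X /w.
  under eq_bigr => i _ do rewrite -big_distrr.
  rewrite sum_delta; apply: eq_bigr => k _; rewrite Hs; apply: Rmult_comm.
have E3 : quad_form M w = M j j.
  rewrite /quad_form /w.
  under eq_bigr => i _ do rewrite -big_distrr.
  by rewrite sum_delta sum_delta_r.
have HY : 0 <= M j j by rewrite -E3; apply: Hp.
have H := Hp (fun i => v i + (- X / (M j j + 1)) * w i).
rewrite q_pert E1 E2 E3 Hq in H.
set Y := M j j in HY H.
have HY1 : 0 < Y + 1 by lra.
have : 0 <= - X ^ 2 * (Y + 2).
  have E : - X ^ 2 * (Y + 2) =
    (0 + - X / (Y + 1) * (X + X) + (- X / (Y + 1)) ^ 2 * Y) * (Y + 1) ^ 2 by field; lra.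
  rewrite E; apply: Rmult_le_pos => //; exact: pow2_ge_0.
move=> h; have : X ^ 2 <= 0 by nra.
have := pow2_ge_0 X; move=> h1 h2.
have : X ^ 2 = 0 by lra.
move=> h3; nra.
Qed.

Definition matof m (P : 'I_m -> 'I_m -> R) : 'M[R]_m := \matrix_(i, j) P i j.

Lemma det_pd m (P : 'I_m -> 'I_m -> R) : pd_mx P -> determinant (matof P) <> 0.
Proof.
move=> HP hdet.
have /det0P [v hv hvA] : determinant (matof P) == 0 by apply/eqP.
have Hk : forall j, \big[Rplus/0]_(i : 'I_m) (v ord0 i * P i j) = 0.
  move=> j; have := congr1 (fun X : 'M[R]_(1, m) => X ord0 j) hvA; rewrite !mxE.
  under eq_bigr => i _ do rewrite mxE.
  move=> h; exact: h.
have hv' : exists i, v ord0 i <> 0.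
  apply: NNPP => h; move/eqP: hv; apply; apply/rowP => i; rewrite mxE.
  apply: NNPP => hi; apply: h; by exists i.
have := HP (fun i => v ord0 i) hv'.
rewrite /quad_form exchange_big /=.
rewrite big1 => [|j _]; first lra.
under eq_bigr => i _ do rewrite -Rmult_assoc.
by rewrite -big_distrl /= Hk Rmult_0_l.
Qed.

Definition rowof m (v : 'I_m -> R) : 'M[R]_(1, m) := \matrix_(i, j) v j.

Lemma det_sing m (P : 'I_m -> 'I_m -> R) v :
  (exists i, v i <> 0) -> (forall j, \big[Rplus/0]_(i : 'I_m) (v i * P i j) = 0) ->
  determinant (matof P) = 0.
Proof.
move=> [i0 hi0] Hk; apply/eqP/det0P; exists (rowof v).
  apply/eqP => h; have := congr1 (fun X : 'M[R]_(1, m) => X ord0 i0) h; rewrite !mxE.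
  exact: hi0.
apply/rowP => j; rewrite !mxE.
under eq_bigr => i _ do rewrite !mxE.
exact: Hk.
Qed.

Ltac polyt := repeat first [ apply: is_poly_const | apply: is_poly_id
   | apply: is_poly_add | apply: is_poly_mul | apply: is_poly_pow ].

Section Main.
Variables (n k : nat).
Hypothesis hn : (2 <= n)%nat.
Hypothesis hk : ~~ odd k.
Local Notation d := (k + 4)%nat.

Lemma fam_poly (a : mon n d) : is_poly (fun r => fam hn r a).
Proof. rewrite /fam /fadd /fscale; polyt. Qed.

Lemma core (phi : form n d -> R) :
  is_poly (fun r => phi (fam hn r)) -> (forall r, 0 < r -> phi (fam hn r) = 0) ->
  phi (fam hn (-1)) = 0.
Proof. move=> Hp Hb; exact: (is_poly_zero Hp Hb). Qed.

Lemma part1 : ~ exists (K : nat) (c : 'I_K -> R) (e : 'I_K -> mon n d -> nat),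
       (forall f : form n d, f_interior (@Pnd n d) f -> (0 < coeff_poly c e f)%R) /\
       (forall f : form n d, f_boundary (@Pnd n d) f -> coeff_poly c e f = 0%R).
Proof.
move=> [K [c [e [Hi Hb]]]].
have H0 : coeff_poly c e (fam hn (-1)) = 0.
  apply: (core (phi := coeff_poly c e)).
    rewrite /coeff_poly; apply: is_poly_big; first exact: is_poly_add.
    move=> q; apply: is_poly_mul; first exact: is_poly_const.
    apply: is_poly_big; first exact: is_poly_mul.
    move=> a; apply: is_poly_pow; exact: fam_poly.
  move=> r Hr; apply: Hb; exact: fam_boundary.
have := Hi _ (fam_interior hn hk); lra.
Qed.

Lemma pencil_pert m (A : mon n d -> 'I_m -> 'I_m -> R) f b s i j :
  pencil A (fadd f (fscale (- s) (delta b))) i j = pencil A f i j - s * A b i j.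
Proof.
rewrite /pencil /fadd /fscale /delta.
rewrite (eq_bigr (fun a => f a * A a i j + (- s) * ((if a == b then 1 else 0) * A a i j)));
  last by move=> a _; ring.
rewrite big_split /= -big_distrr /= sum_delta; ring.
Qed.

Lemma part2 : ~ exists (m : nat) (A : mon n d -> 'I_m -> 'I_m -> R),
       (forall a, sym_mx (A a)) /\
       (forall f : form n d, Pnd f <-> psd_mx (pencil A f)) /\
       (forall f : form n d, f_interior (@Pnd n d) f -> pd_mx (pencil A f)).
Proof.
move=> [m [A [Hsym [Hiff Hint]]]].
set phi := fun f : form n d => determinant (matof (pencil A f)).
have Hsp : forall f i j, pencil A f i j = pencil A f j i.
  move=> f i j; rewrite /pencil; apply: eq_bigr => a _; by rewrite Hsym.
have H0 : phi (fam hn (-1)) = 0.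
  apply: core.
    rewrite /phi /matof; unfold determinant.
    apply: is_poly_big; first exact: is_poly_add.
    move=> s; apply: is_poly_mul; first exact: is_poly_const.
    apply: is_poly_big; first exact: is_poly_mul.
    move=> i.
    have HH : forall x, is_poly (fun r => pencil A (fam hn r) i x).
      move=> x; rewrite /pencil; apply: is_poly_big; first exact: is_poly_add.
      move=> a; apply: is_poly_mul; [exact: fam_poly | exact: is_poly_const].
    apply: (is_poly_ext _ (HH _)) => r; by rewrite mxE.
  move=> r Hr.
  set P := pencil A (fam hn r).
  have Hpsd : psd_mx P by apply/Hiff; exact: Pnd_fam.
  have Hnpd : ~ pd_mx P.
    move=> Hpd.
    have [s [Hs Hps]] := coerc (A (pw k (iy hn))) Hpd.
    have : Pnd (fadd (fam hn r) (fscale (- s) (delta (pw k (iy hn))))).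
      apply/Hiff.
      have -> : pencil A (fadd (fam hn r) (fscale (- s) (delta (pw k (iy hn))))) =
                (fun i j => P i j - s * A (pw k (iy hn)) i j).
        apply: functional_extensionality => i; apply: functional_extensionality => j.
        exact: pencil_pert.
      exact: Hps.
    move=> /(_ (u0 hn r)).
    rewrite eval_fadd eval_fscale eval_delta eval_fam pval_u0 // mono_pw_u0; lra.
  have [v [hv hq]] : exists v, (exists i, v i <> 0) /\ ~ (0 < quad_form P v).
    apply: NNPP => h; apply: Hnpd => v hv.
    apply: NNPP => hq; apply: h; by exists v.
  have hq0 : quad_form P v = 0 by have := Hpsd v; lra.
  apply: (det_sing hv); apply: kernel => //; exact: Hsp.
exact: (det_pd (Hint _ (fam_interior hn hk))).
Qed.

End Main.

Close Scope R_scope.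

Theorem mainTheorem6 (n d : nat) (hd : (2 < d)%N) (hdeven : ~~ odd d)
    (hn : (2 <= n)%N) :
  (~ exists (K : nat) (c : 'I_K -> R) (e : 'I_K -> mon n d -> nat),
       (forall f : form n d, f_interior (@Pnd n d) f -> (0 < coeff_poly c e f)%R) /\
       (forall f : form n d, f_boundary (@Pnd n d) f -> coeff_poly c e f = 0%R))
  /\
  (~ exists (m : nat) (A : mon n d -> 'I_m -> 'I_m -> R),
       (forall a, sym_mx (A a)) /\
       (forall f : form n d, Pnd f <-> psd_mx (pencil A f)) /\
       (forall f : form n d, f_interior (@Pnd n d) f -> pd_mx (pencil A f))).
Proof.
have H4 : (4 <= d)%N.
  by move: hd hdeven; case: d => [|[|[|[|d']]]].
have Ed : d = (d - 4 + 4)%N by rewrite subnK.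
have hk : ~~ odd (d - 4).
  by move: hdeven; rewrite {1}Ed oddD /= addbF.
move: hd hdeven H4; rewrite Ed => _ _ _.
split; [exact: part1 | exact: part2].
Qed.
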